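(* Let $f(x)=1-|1-2x|$ be the tent map, let $g:[0,1]\to[0,1]$ be a piecewise linear unimodal map, and let $h:[0,1]\to[0,1]$ be a homeomorphism with $h\circ f=g\circ h$. Let $\psi:[0,1]\to[0,1]$ be a continuous non-constant map with $g\circ\psi=\psi\circ g$, and suppose $[0,1]$ splits into exactly $t\ge 1$ maximal intervals of monotonicity of $\psi$. Then $\psi=h\circ\xi_t\circ h^{-1}$, where $$\xi_t(x)=\frac{1-(-1)^{[tx]}}{2}+(-1)^{[tx]}\{tx\},\quad x\in[0,1].$$
   Context: $[\cdot]$ denotes the integer part and $\{\cdot\}$ the fractional part of a real number; thus $\xi_t$ is the continuous piecewise linear map with $\xi_t(0)=0$, slopes $\pm t$, and all kinks at the points $j/t$, where it alternately takes the values $1$ and $0$. A map $g:[0,1]\to[0,1]$ is called unimodal if there is $v\in(0,1)$ such that $g$ is increasing on $[0,v]$, decreasing on $[v,1]$, and $g(0)=g(1)=0$, $g(v)=1$. *)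

(* Defs.v *)
From Stdlib Require Import Reals Lra Lia.
Open Scope R_scope.

Definition I01 (x : R) : Prop := 0 <= x <= 1.

Definition tent (x : R) : R := 1 - Rabs (1 - 2 * x).

Definition xi (t : nat) (x : R) : R :=
  let k := Int_part (INR t * x) in
  (1 - powerRZ (-1) k) / 2 + powerRZ (-1) k * frac_part (INR t * x).

Definition continuous_on01 (f : R -> R) : Prop :=
  forall x, I01 x -> forall eps, 0 < eps ->
    exists delta, 0 < delta /\
      forall y, I01 y -> Rabs (y - x) < delta -> Rabs (f y - f x) < eps.

Definition maps01 (f : R -> R) : Prop := forall x, I01 x -> I01 (f x).

Definition homeo01 (h hinv : R -> R) : Prop :=
  maps01 h /\ maps01 hinv /\
  (forall x, I01 x -> hinv (h x) = x) /\
  (forall y, I01 y -> h (hinv y) = y) /\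
  continuous_on01 h /\ continuous_on01 hinv.

Definition nondecr_on (f : R -> R) (a b : R) : Prop :=
  forall x y, a <= x -> x <= y -> y <= b -> f x <= f y.
Definition nonincr_on (f : R -> R) (a b : R) : Prop :=
  forall x y, a <= x -> x <= y -> y <= b -> f y <= f x.
Definition monotone_on (f : R -> R) (a b : R) : Prop :=
  nondecr_on f a b \/ nonincr_on f a b.

Definition unimodal (g : R -> R) : Prop :=
  exists v, 0 < v < 1 /\ nondecr_on g 0 v /\ nonincr_on g v 1 /\
    g 0 = 0 /\ g 1 = 0 /\ g v = 1.

Definition piecewise_linear01 (g : R -> R) : Prop :=
  exists (n : nat) (a : nat -> R),
    a 0%nat = 0 /\ a n = 1 /\
    (forall i, (i < n)%nat -> a i < a (S i)) /\
    (forall i, (i < n)%nat -> exists m c, forall x,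
        a i <= x <= a (S i) -> g x = m * x + c).

Definition monotone_laps (psi : R -> R) (t : nat) : Prop :=
  exists b : nat -> R,
    b 0%nat = 0 /\ b t = 1 /\
    (forall i, (i < t)%nat -> b i < b (S i)) /\
    (forall i, (i < t)%nat -> monotone_on psi (b i) (b (S i))) /\
    (forall i, (S i < t)%nat -> ~ monotone_on psi (b i) (b (S (S i)))).

(* Main.v *)
Require Import Defs.
From Stdlib Require Import Reals Lra Lia Classical.
Open Scope R_scope.

Definition Tw (y : R) : R :=
  (1 - powerRZ (-1) (Int_part y)) / 2 + powerRZ (-1) (Int_part y) * frac_part y.

Lemma xi_Tw t x : xi t x = Tw (INR t * x).
Proof. reflexivity. Qed.

Lemma pm1 n : (-1)^n = if Nat.even n then 1 else -1.
Proof.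
  induction n; simpl pow; [reflexivity|].
  rewrite IHn, Nat.even_succ, <- Nat.negb_even.
  destruct (Nat.even n); simpl; ring.
Qed.

Lemma Int_part_nat (j:nat) y : INR j <= y < INR j + 1 -> Int_part y = Z.of_nat j.
Proof.
  intros H. unfold Int_part.
  rewrite <- (tech_up y (Z.of_nat j + 1)); [ring| |];
  rewrite plus_IZR, <- INR_IZR_INZ; simpl; lra.
Qed.

Lemma T_lap (j:nat) y : INR j <= y <= INR j + 1 ->
  Tw y = if Nat.even j then y - INR j else INR j + 1 - y.
Proof.
  intros [H1 H2]. unfold Tw, frac_part. destruct (Rlt_or_le y (INR j + 1)).
  - rewrite (Int_part_nat j y) by lra.
    rewrite <- pow_powerRZ, <- INR_IZR_INZ, pm1. destruct (Nat.even j); field.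
  - assert (E : y = INR (S j)) by (rewrite S_INR; lra). subst y.
    rewrite (Int_part_nat (S j)) by (rewrite S_INR; lra).
    rewrite <- pow_powerRZ, <- INR_IZR_INZ, pm1, Nat.even_succ, <- Nat.negb_even, S_INR.
    destruct (Nat.even j); simpl; field.
Qed.

Lemma lap_exists y : 0 <= y -> exists j:nat, INR j <= y < INR j + 1.
Proof.
  intros Hy. destruct (base_Int_part y) as [H1 H2].
  assert (Hz : (0 <= Int_part y)%Z).
  { assert (-1 < IZR (Int_part y)) by lra. apply lt_IZR in H. lia. }
  exists (Z.to_nat (Int_part y)).
  rewrite INR_IZR_INZ, Znat.Z2Nat.id by exact Hz. lra.
Qed.

Lemma T01 y : 0 <= y <= 1 -> Tw y = y.
Proof. intros H. rewrite (T_lap 0) by (simpl; lra). simpl. ring. Qed.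

Lemma T_range y : 0 <= y -> 0 <= Tw y <= 1.
Proof.
  intros Hy. destruct (lap_exists y Hy) as [j Hj].
  rewrite (T_lap j) by lra. destruct (Nat.even j); lra.
Qed.

Lemma T_nat n : Tw (INR n) = 0 \/ Tw (INR n) = 1.
Proof.
  rewrite (T_lap n) by lra. destruct (Nat.even n); [left|right]; ring.
Qed.

Lemma T_open (j:nat) y : INR j < y < INR j + 1 -> 0 < Tw y < 1.
Proof.
  intros H. rewrite (T_lap j) by lra. destruct (Nat.even j); lra.
Qed.

Lemma T_is_nat y : 0 <= y -> (Tw y = 0 \/ Tw y = 1) -> exists n, y = INR n.
Proof.
  intros Hy HT. destruct (lap_exists y Hy) as [j Hj].
  rewrite (T_lap j) in HT by lra.
  destruct (Nat.even j); destruct HT as [HT|HT];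
  first [ exists j; lra | exists (S j); rewrite S_INR; lra ].
Qed.

Lemma T_inj (j:nat) y z : INR j <= y <= INR j + 1 -> INR j <= z <= INR j + 1 ->
  Tw y = Tw z -> y = z.
Proof.
  intros Hy Hz. rewrite (T_lap j y Hy), (T_lap j z Hz).
  destruct (Nat.even j); lra.
Qed.

Lemma T_double y : 0 <= y -> Tw (2 * y) = tent (Tw y).
Proof.
  intros Hy. destruct (lap_exists y Hy) as [j Hj].
  rewrite (T_lap j y) by lra. unfold tent.
  destruct (Rle_or_lt y (INR j + /2)).
  - rewrite (T_lap (2*j)) by (rewrite mult_INR; simpl; lra).
    rewrite Nat.even_even, mult_INR. simpl (INR 2).
    destruct (Nat.even j) eqn:E; unfold Rabs; destruct Rcase_abs; lra.
  - rewrite (T_lap (2*j+1)) by (rewrite plus_INR, mult_INR; simpl; lra).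
    rewrite Nat.even_odd, plus_INR, mult_INR. simpl (INR 2). simpl (INR 1).
    destruct (Nat.even j) eqn:E; unfold Rabs; destruct Rcase_abs; lra.
Qed.

Lemma T_refl n y : 0 <= y <= 2 * INR n -> Tw (2 * INR n - y) = Tw y.
Proof.
  intros Hy. destruct (lap_exists y (proj1 Hy)) as [j Hj].
  destruct (Nat.lt_ge_cases j (2*n)) as [Hl|Hg].
  - assert (Hj' : INR (2*n - j - 1) = 2 * INR n - INR j - 1).
    { rewrite !minus_INR by lia. rewrite mult_INR. simpl. ring. }
    assert (He : Nat.even (2*n - j - 1) = negb (Nat.even j)).
    { assert (H : Nat.even ((2*n - j - 1) + (j+1)) = true).
      { replace ((2*n - j - 1) + (j+1))%nat with (2*n)%nat by lia. apply Nat.even_even. }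
      rewrite Nat.even_add, Nat.add_1_r, Nat.even_succ, <- Nat.negb_even in H.
      destruct (Nat.even (2*n-j-1)), (Nat.even j); simpl in *; congruence. }
    rewrite (T_lap (2*n - j - 1)) by (rewrite Hj'; lra).
    rewrite (T_lap j) by lra. rewrite He, Hj'.
    destruct (Nat.even j); simpl; ring.
  - apply le_INR in Hg. rewrite mult_INR in Hg. simpl in Hg.
    assert (y = 2 * INR n) by lra. subst y.
    replace (2 * INR n - 2 * INR n) with 0 by ring.
    rewrite T01 by lra.
    replace (2 * INR n) with (INR (2*n)%nat) by (rewrite mult_INR; simpl; ring).
    rewrite (T_lap (2*n)) by lra. rewrite Nat.even_even. ring.
Qed.

Definition clamp (x : R) : R := Rmax 0 (Rmin 1 x).

Lemma clamp_in x : I01 (clamp x).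
Proof. unfold clamp, I01, Rmax, Rmin. repeat destruct Rle_dec; lra. Qed.

Lemma clamp_id x : I01 x -> clamp x = x.
Proof. unfold clamp, I01, Rmax, Rmin. intros. repeat destruct Rle_dec; lra. Qed.

Lemma clamp_lip x y : Rabs (clamp y - clamp x) <= Rabs (y - x).
Proof.
  unfold clamp, Rmax, Rmin. repeat destruct Rle_dec;
  unfold Rabs; repeat destruct Rcase_abs; lra.
Qed.

Lemma cont_clamp F : continuous_on01 F -> continuity (fun x => F (clamp x)).
Proof.
  intros HF x. unfold continuity_pt, continue_in, limit1_in, limit_in.
  intros eps Heps. destruct (HF (clamp x) (clamp_in x) eps Heps) as [d [Hd Hd']].
  exists d. split; [exact Hd|]. intros y [_ Hy]. simpl in *. unfold R_dist in *.
  apply Hd'. apply clamp_in. eapply Rle_lt_trans; [apply clamp_lip|exact Hy].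
Qed.

Lemma IVT01 F a b y : continuous_on01 F -> 0 <= a <= b -> b <= 1 ->
  F a <= y <= F b -> exists c, a <= c <= b /\ F c = y.
Proof.
  intros HF Hab Hb Hy.
  destruct (Req_dec (F a) y) as [E|E]; [exists a; split; [lra|exact E]|].
  destruct (Req_dec (F b) y) as [E'|E']; [exists b; split; [lra|exact E']|].
  assert (Hlt : a < b).
  { destruct (Req_dec a b); [subst; lra|lra]. }
  set (G := fun x => F (clamp x) - y).
  assert (HG : continuity G).
  { unfold G. apply continuity_minus; [apply cont_clamp; exact HF|apply continuity_const; intros ? ?; reflexivity]. }
  destruct (IVT G a b HG Hlt) as [z [Hz Gz]].
  - unfold G. rewrite clamp_id by (unfold I01; lra). lra.
  - unfold G. rewrite clamp_id by (unfold I01; lra). lra.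
  - exists z. split; [exact Hz|]. unfold G in Gz. rewrite clamp_id in Gz by (unfold I01; lra). lra.
Qed.

Lemma cont_ext F G : continuous_on01 F -> (forall x, I01 x -> G x = F x) -> continuous_on01 G.
Proof.
  intros HF E x Hx eps Heps. destruct (HF x Hx eps Heps) as [d [Hd Hd']].
  exists d. split; [exact Hd|]. intros y Hy Hyx. rewrite !E by assumption. auto.
Qed.

Lemma cont_comp F G : continuous_on01 F -> continuous_on01 G -> maps01 G ->
  continuous_on01 (fun x => F (G x)).
Proof.
  intros HF HG HGm x Hx eps Heps.
  destruct (HF (G x) (HGm x Hx) eps Heps) as [d [Hd Hd']].
  destruct (HG x Hx d Hd) as [d2 [Hd2 Hd2']].
  exists d2. split; [exact Hd2|]. intros y Hy Hyx. apply Hd'; auto.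
Qed.

Lemma cont_affine F a b c d : continuous_on01 F -> (forall u, I01 u -> I01 (a*u+b)) ->
  continuous_on01 (fun u => c + d * F (a*u+b)).
Proof.
  intros HF Hab x Hx eps Heps.
  set (e := eps / (Rabs d + 1)).
  assert (He : 0 < e) by (unfold e; apply Rdiv_lt_0_compat; [lra| pose proof (Rabs_pos d); lra]).
  destruct (HF (a*x+b) (Hab x Hx) e He) as [d1 [Hd1 Hd1']].
  exists (d1 / (Rabs a + 1)). split.
  { apply Rdiv_lt_0_compat; [lra| pose proof (Rabs_pos a); lra]. }
  intros y Hy Hyx.
  assert (Hk : Rabs (F (a*y+b) - F (a*x+b)) < e).
  { apply Hd1'. apply Hab; exact Hy.
    replace (a*y+b - (a*x+b)) with (a*(y-x)) by ring. rewrite Rabs_mult.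
    pose proof (Rabs_pos a). pose proof (Rabs_pos (y-x)).
    apply Rle_lt_trans with ((Rabs a + 1) * Rabs (y - x)); [nra|].
    apply (Rmult_lt_compat_l (Rabs a + 1)) in Hyx; [|lra].
    replace ((Rabs a + 1) * (d1 / (Rabs a + 1))) with d1 in Hyx by (field; lra). exact Hyx. }
  replace (c + d * F (a*y+b) - (c + d * F (a*x+b))) with (d * (F (a*y+b) - F (a*x+b))) by ring.
  rewrite Rabs_mult. pose proof (Rabs_pos d). pose proof (Rabs_pos (F (a*y+b) - F (a*x+b))).
  apply Rle_lt_trans with ((Rabs d + 1) * Rabs (F (a*y+b) - F (a*x+b))); [nra|].
  apply (Rmult_lt_compat_l (Rabs d + 1)) in Hk; [|lra].
  unfold e in Hk. replace ((Rabs d + 1) * (eps / (Rabs d + 1))) with eps in Hk by (field; lra).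
  exact Hk.
Qed.

Lemma inj_incr F : continuous_on01 F ->
  (forall x y, I01 x -> I01 y -> F x = F y -> x = y) -> F 0 < F 1 ->
  forall x y, 0 <= x -> x < y -> y <= 1 -> F x < F y.
Proof.
  intros HF Hinj H01.
  assert (mid : forall a b z, 0 <= a -> a < z -> z < b -> b <= 1 -> F a < F b -> F a < F z < F b).
  { intros a b z Ha Haz Hzb Hb Hab. split.
    - destruct (Rlt_or_le (F a) (F z)) as [|Hle]; [assumption|].
      destruct (Req_dec (F a) (F z)) as [E|NE].
      + apply Hinj in E; unfold I01; lra.
      + destruct (IVT01 F z b (F a) HF) as [c [Hc Fc]]; try lra.
        apply Hinj in Fc; unfold I01; lra.
    - destruct (Rlt_or_le (F z) (F b)) as [|Hle]; [assumption|].
      destruct (Req_dec (F z) (F b)) as [E|NE].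
      + apply Hinj in E; unfold I01; lra.
      + destruct (IVT01 F a z (F b) HF) as [c [Hc Fc]]; try lra.
        apply Hinj in Fc; unfold I01; lra. }
  intros x y Hx Hxy Hy.
  destruct (Req_dec x 0) as [->|Hx0].
  - destruct (Req_dec y 1) as [->|Hy1]; [exact H01|]. apply (mid 0 1 y); lra.
  - destruct (Req_dec y 1) as [->|Hy1]; [apply (mid 0 1 x); lra|].
    assert (F 0 < F y) by (apply (mid 0 1 y); lra).
    apply (mid 0 y x); lra.
Qed.

Definition comm (phi : R -> R) := forall x, I01 x -> tent (phi x) = phi (tent x).

Lemma tent_half y : 0 <= y <= 1 -> tent (y/2) = y.
Proof. intros. unfold tent, Rabs. destruct Rcase_abs; lra. Qed.

Lemma tent_refl y : 0 <= y <= 1 -> tent (1 - y/2) = y.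
Proof. intros. unfold tent, Rabs. destruct Rcase_abs; lra. Qed.

Lemma tent_01 v : I01 v -> I01 (tent v).
Proof. unfold I01, tent, Rabs. intros. destruct Rcase_abs; lra. Qed.

Lemma phi_half phi : comm phi -> forall y, 0 <= y <= 1 -> phi y = tent (phi (y/2)).
Proof. intros H y Hy. rewrite H by (unfold I01; lra). rewrite tent_half; auto. Qed.

Lemma phi_refl phi : comm phi -> forall y, 0 <= y <= 1 -> phi y = tent (phi (1 - y/2)).
Proof. intros H y Hy. rewrite H by (unfold I01; lra). rewrite tent_refl; auto. Qed.

Lemma pow_small e : 0 < e -> exists n, (/2)^n < e.
Proof.
  intros He. destruct (pow_lt_1_zero (/2)) with e as [N HN]; [rewrite Rabs_pos_eq; lra|exact He|].
  exists N. specialize (HN N (le_n N)). rewrite Rabs_pos_eq in HN; [exact HN|].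
  apply pow_le; lra.
Qed.

Lemma pow_half_pos n : 0 < (/2)^n.
Proof. apply pow_lt; lra. Qed.

Lemma pow_half_le1 n : (/2)^n <= 1.
Proof. induction n; simpl; [lra|]. pose proof (pow_half_pos n). lra. Qed.

Lemma const0_global phi eps : comm phi -> 0 < eps ->
  (forall x, 0 <= x <= eps -> x <= 1 -> phi x = phi 0) ->
  forall x, I01 x -> phi x = phi 0.
Proof.
  intros Hc He H.
  assert (K : forall n x, 0 <= x <= 1 -> x * (/2)^n <= eps -> phi x = phi 0).
  { induction n; intros x Hx Hxe.
    - simpl in Hxe. apply H; lra.
    - rewrite (phi_half phi Hc x Hx). rewrite IHn.
      + rewrite Hc by (unfold I01; lra). replace (tent 0) with 0 by (unfold tent; rewrite Rabs_pos_eq; lra). reflexivity.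
      + lra.
      + simpl in Hxe. lra. }
  intros x Hx. destruct (pow_small eps He) as [n Hn].
  apply (K n); [exact Hx|]. pose proof (pow_half_pos n). unfold I01 in Hx. nra.
Qed.

Lemma const_spread phi : comm phi -> forall n p q c, 0 <= p -> p < q -> q <= 1 ->
  q - p >= (/2)^n -> (forall x, p <= x <= q -> phi x = c) ->
  exists eps, 0 < eps /\ forall x, 0 <= x <= eps -> x <= 1 -> phi x = phi 0.
Proof.
  intros Hc n. induction n; intros p q c Hp Hpq Hq Hl Hconst.
  - simpl in Hl. exists 1. split; [lra|]. intros x Hx _.
    rewrite (Hconst x) by lra. rewrite (Hconst 0) by lra. reflexivity.
  - simpl in Hl. destruct (Rle_or_lt q (/2)) as [Hq2|Hq2].
    + apply (IHn (2*p) (2*q) (tent c)); try lra.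
      intros x Hx. rewrite (phi_half phi Hc x) by lra. rewrite (Hconst (x/2)) by lra. reflexivity.
    + destruct (Rle_or_lt (/2) p) as [Hp2|Hp2].
      * apply (IHn (2-2*q) (2-2*p) (tent c)); try lra.
        intros x Hx. rewrite (phi_refl phi Hc x) by lra. rewrite (Hconst (1 - x/2)) by lra. reflexivity.
      * assert (K1 : forall x, 2*p <= x <= 1 -> phi x = tent c).
        { intros x Hx. rewrite (phi_half phi Hc x) by lra. rewrite (Hconst (x/2)) by lra. reflexivity. }
        exists (Rmin 1 (2 - 4*p)). split.
        { apply Rmin_glb_lt; lra. }
        intros x Hx Hx1. pose proof (Rmin_r 1 (2-4*p)).
        rewrite (phi_refl phi Hc x) by lra. rewrite (K1 (1 - x/2)) by lra.
        rewrite (phi_refl phi Hc 0) by lra. rewrite (K1 (1 - 0/2)) by lra. reflexivity.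
Qed.

Lemma const_interval phi p q c : comm phi -> 0 <= p -> p < q -> q <= 1 ->
  (forall x, p <= x <= q -> phi x = c) -> forall x, I01 x -> phi x = phi 0.
Proof.
  intros Hc Hp Hpq Hq H.
  destruct (pow_small (q - p)) as [n Hn]; [lra|].
  destruct (const_spread phi Hc n p q c Hp Hpq Hq) as [e [He He']]; [lra|exact H|].
  apply (const0_global phi e Hc He He').
Qed.

Definition strict (F : R -> R) := forall x y, 0 <= x -> x < y -> y <= 1 -> F x < F y.

Lemma strict_nonneg A u : strict A -> A 0 = 0 -> I01 u -> 0 <= A u.
Proof.
  intros HA H0 Hu. unfold I01 in Hu. destruct (Req_dec u 0) as [->|Hne]; [lra|].
  rewrite <- H0. left. apply HA; lra.
Qed.

Lemma strict_le A x y : strict A -> 0 <= x -> x <= y -> y <= 1 -> A x <= A y.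
Proof. intros HA ? ? ?. destruct (Req_dec x y) as [->|]; [lra|]. left; apply HA; lra. Qed.

Lemma lift_le A B : continuous_on01 B -> strict A -> strict B -> A 0 = 0 -> B 0 = 0 ->
  (forall u, I01 u -> Tw (A u) = Tw (B u)) ->
  forall k u, I01 u -> A u <= INR k -> B u <= INR k.
Proof.
  intros HcB HA HB A0 B0 HT k. induction k; intros u Hu HAu.
  - unfold I01 in Hu. destruct (Req_dec u 0) as [->|Hne]; [rewrite B0; simpl; lra|].
    exfalso. assert (A 0 < A u) by (apply HA; lra). simpl in HAu. lra.
  - apply Rnot_lt_le. intros HBu.
    pose proof (pos_INR (S k)) as Hpk.
    destruct (IVT01 B 0 u (INR (S k)) HcB) as [v [Hv Bv]]; unfold I01 in Hu; try lra.
    assert (Hvu : v < u).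
    { destruct (Req_dec v u) as [->|]; [lra|lra]. }
    assert (HAv : A v < A u) by (apply HA; lra).
    assert (Tv : Tw (A v) = 0 \/ Tw (A v) = 1).
    { rewrite HT by (unfold I01; lra). rewrite Bv. apply T_nat. }
    destruct (T_is_nat (A v) (strict_nonneg A v HA A0 ltac:(unfold I01; lra)) Tv) as [n Hn].
    assert (Hnk : (n < S k)%nat) by (apply INR_lt; lra).
    assert (A v <= INR k) by (rewrite Hn; apply le_INR; lia).
    assert (B v <= INR k) by (apply IHk; [unfold I01; lra|assumption]).
    rewrite S_INR in Bv. lra.
Qed.

Lemma lift_lt A B : continuous_on01 B -> strict A -> strict B -> A 0 = 0 -> B 0 = 0 ->
  (forall u, I01 u -> Tw (A u) = Tw (B u)) ->
  forall k u, I01 u -> A u < INR k -> B u < INR k.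
Proof.
  intros HcB HA HB A0 B0 HT k u Hu HAu.
  apply Rnot_le_lt. intros HBu.
  pose proof (strict_nonneg A u HA A0 Hu).
  destruct k as [|k]; [simpl in HAu; lra|].
  pose proof (pos_INR (S k)) as Hpk.
  destruct (IVT01 B 0 u (INR (S k)) HcB) as [v [Hv Bv]]; unfold I01 in Hu; try lra.
  assert (HAv : A v <= A u) by (apply strict_le; auto; lra).
  assert (Tv : Tw (A v) = 0 \/ Tw (A v) = 1).
  { rewrite HT by (unfold I01; lra). rewrite Bv. apply T_nat. }
  destruct (T_is_nat (A v) (strict_nonneg A v HA A0 ltac:(unfold I01; lra)) Tv) as [n Hn].
  assert (Hnk : (n < S k)%nat) by (apply INR_lt; lra).
  assert (A v <= INR k) by (rewrite Hn; apply le_INR; lia).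
  assert (B v <= INR k) by (apply (lift_le A B HcB HA HB A0 B0 HT k v); [unfold I01; lra|assumption]).
  rewrite S_INR in Bv. lra.
Qed.

Lemma lift_eq A B : continuous_on01 A -> continuous_on01 B -> strict A -> strict B ->
  A 0 = 0 -> B 0 = 0 -> (forall u, I01 u -> Tw (A u) = Tw (B u)) ->
  forall u, I01 u -> A u = B u.
Proof.
  intros HcA HcB HA HB A0 B0 HT u Hu.
  destruct (lap_exists (A u) (strict_nonneg A u HA A0 Hu)) as [j Hj].
  assert (H1 : B u < INR (S j)).
  { apply (lift_lt A B HcB HA HB A0 B0 HT); [exact Hu|rewrite S_INR; lra]. }
  assert (H2 : INR j <= B u).
  { apply Rnot_lt_le. intros Hb.
    assert (A u < INR j).
    { apply (lift_lt B A HcA HB HA B0 A0); [intros; symmetry; auto|exact Hu|exact Hb]. }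
    lra. }
  rewrite S_INR in H1.
  apply (T_inj j); [lra|lra|apply HT; exact Hu].
Qed.

Lemma lapL1 phi n0 p q y0 k : (forall x, I01 x -> phi x = Tw (INR n0 * x)) ->
  (0 < INR n0) -> monotone_on phi p q -> 0 <= p -> p < y0 -> y0 < q -> q <= 1 ->
  INR n0 * y0 = INR k -> False.
Proof.
  intros Hphi HM Hmon Hp Hpy Hyq Hq Hk.
  set (M := INR n0) in *.
  destruct k as [|k].
  { simpl in Hk. assert (y0 = 0) by nra. lra. }
  set (e := Rmin (Rmin (y0 - p) (q - y0)) (/(2*M))).
  assert (He : 0 < e).
  { unfold e. apply Rmin_glb_lt; [apply Rmin_glb_lt; lra|]. apply Rinv_0_lt_compat; lra. }
  assert (He1 : e <= y0 - p) by (unfold e; eapply Rle_trans; [apply Rmin_l|apply Rmin_l]).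
  assert (He2 : e <= q - y0) by (unfold e; eapply Rle_trans; [apply Rmin_l|apply Rmin_r]).
  assert (He3 : M * e <= /2).
  { assert (e <= /(2*M)) by (unfold e; apply Rmin_r).
    apply Rmult_le_compat_l with (r := M) in H; [|lra].
    replace (M * / (2*M)) with (/2) in H by (field; lra). exact H. }
  assert (Hp' : 0 < phi (y0 - e) < 1).
  { rewrite Hphi by (unfold I01; lra). apply (T_open k). rewrite S_INR in Hk. nra. }
  assert (Hq' : 0 < phi (y0 + e) < 1).
  { rewrite Hphi by (unfold I01; lra). apply (T_open (S k)). nra. }
  assert (Hy : phi y0 = 0 \/ phi y0 = 1).
  { rewrite Hphi by (unfold I01; lra). fold M. rewrite Hk. apply T_nat. }
  destruct Hmon as [Hm|Hm].
  - assert (phi (y0 - e) <= phi y0) by (apply Hm; lra).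
    assert (phi y0 <= phi (y0 + e)) by (apply Hm; lra). lra.
  - assert (phi y0 <= phi (y0 - e)) by (apply Hm; lra).
    assert (phi (y0 + e) <= phi y0) by (apply Hm; lra). lra.
Qed.

Lemma lapL2 phi n0 p q : (forall x, I01 x -> phi x = Tw (INR n0 * x)) ->
  (0 < INR n0) -> 0 <= p -> p <= q -> q <= 1 ->
  (forall k y, p < y < q -> INR n0 * y <> INR k) -> monotone_on phi p q.
Proof.
  intros Hphi HM Hp Hpq Hq Hno.
  set (M := INR n0) in *.
  destruct (lap_exists (M * p)) as [j Hj]; [nra|].
  assert (HMq : M * q <= INR j + 1).
  { apply Rnot_lt_le. intros Hlt.
    apply (Hno (S j) (INR (S j) / M)).
    - rewrite S_INR. split.
      + apply (Rmult_lt_reg_l M); [lra|]. field_simplify; lra.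
      + apply (Rmult_lt_reg_l M); [lra|]. field_simplify; lra.
    - field. lra. }
  assert (Hform : forall y, p <= y <= q ->
     phi y = if Nat.even j then M * y - INR j else INR j + 1 - M * y).
  { intros y Hy. rewrite Hphi by (unfold I01; lra). apply T_lap. nra. }
  destruct (Nat.even j) eqn:E.
  - left. intros x y Hx Hxy Hy. rewrite !Hform by lra. nra.
  - right. intros x y Hx Hxy Hy. rewrite !Hform by lra. nra.
Qed.

Lemma b_mono (b : nat -> R) t : (forall i, (i < t)%nat -> b i < b (S i)) ->
  forall i j, (i <= j)%nat -> (j <= t)%nat -> b i <= b j.
Proof.
  intros H i j Hij. induction Hij; intros Hj; [lra|].
  assert (b m < b (S m)) by (apply H; lia). specialize (IHHij ltac:(lia)). lra.
Qed.

Lemma lap_count phi n0 t b : (forall x, I01 x -> phi x = Tw (INR n0 * x)) ->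
  (0 < INR n0) -> (1 <= t)%nat -> b 0%nat = 0 -> b t = 1 ->
  (forall i, (i < t)%nat -> b i < b (S i)) ->
  (forall i, (i < t)%nat -> monotone_on phi (b i) (b (S i))) ->
  (forall i, (S i < t)%nat -> ~ monotone_on phi (b i) (b (S (S i)))) ->
  n0 = t.
Proof.
  intros Hphi HM Ht b0 bt Hinc Hmon Hnm.
  set (M := INR n0) in *.
  assert (Hb01 : forall i, (i <= t)%nat -> 0 <= b i <= 1).
  { intros i Hi. split.
    - rewrite <- b0. apply (b_mono b t Hinc); lia.
    - rewrite <- bt. apply (b_mono b t Hinc); lia. }
  assert (Hint : forall i, (S i < t)%nat -> exists k, M * b (S i) = INR k).
  { intros i Hi. apply NNPP. intros Hne.
    apply (Hnm i Hi). apply (lapL2 phi n0); auto.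
    - apply Hb01; lia.
    - pose proof (Hinc i ltac:(lia)). pose proof (Hinc (S i) ltac:(lia)). lra.
    - apply Hb01; lia.
    - intros k y Hy Hk.
      pose proof (Hb01 i ltac:(lia)). pose proof (Hb01 (S i) ltac:(lia)).
      pose proof (Hb01 (S (S i)) ltac:(lia)).
      destruct (Rtotal_order y (b (S i))) as [Hl|[He|Hg]].
      + apply (lapL1 phi n0 (b i) (b (S i)) y k Hphi HM); try lra; try (apply Hmon; lia).
      + apply Hne. exists k. subst y. exact Hk.
      + apply (lapL1 phi n0 (b (S i)) (b (S (S i))) y k Hphi HM); try lra; try (apply Hmon; lia). }
  assert (Hpos : forall i, (i < t)%nat -> M * b i = INR i).
  { induction i; intros Hi.
    - rewrite b0. simpl. ring.
    - destruct (Hint i Hi) as [k Hk].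
      specialize (IHi ltac:(lia)).
      assert (Hb : b i < b (S i)) by (apply Hinc; lia).
      assert (Hik : (i < k)%nat) by (apply INR_lt; nra).
      destruct (Nat.eq_dec k (S i)) as [->|Hne]; [exact Hk|].
      exfalso. apply (lapL1 phi n0 (b i) (b (S i)) (INR (S i) / M) (S i) Hphi HM).
      + apply Hmon; lia.
      + apply Hb01; lia.
      + apply (Rmult_lt_reg_l M); [lra|]. field_simplify; [|lra]. rewrite S_INR. lra.
      + apply (Rmult_lt_reg_l M); [lra|]. field_simplify; [|lra].
        rewrite Hk. apply lt_INR. lia.
      + apply Hb01; lia.
      + unfold M in *; field; lra. }
  destruct t as [|t']; [lia|].
  assert (Hl : M * b t' = INR t') by (apply Hpos; lia).
  assert (Hb : b t' < b (S t')) by (apply Hinc; lia).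
  rewrite bt in Hb.
  assert (Ht1 : (t' < n0)%nat) by (apply INR_lt; fold M; nra).
  destruct (Nat.eq_dec n0 (S t')) as [E|Hne]; [exact E|].
  exfalso. apply (lapL1 phi n0 (b t') (b (S t')) (INR (S t') / M) (S t') Hphi HM).
  - apply Hmon; lia.
  - apply Hb01; lia.
  - apply (Rmult_lt_reg_l M); [lra|]. field_simplify; [|lra]. rewrite S_INR. lra.
  - rewrite bt. apply (Rmult_lt_reg_l M); [lra|]. field_simplify; [|lra].
    unfold M. apply lt_INR. lia.
  - lra.
  - unfold M in *; field; lra.
Qed.

Lemma fixed_tent c : tent c = c -> c = 0 \/ c = 2/3.
Proof. unfold tent, Rabs. destruct Rcase_abs; intros; [right|left]; lra. Qed.

Lemma tent_zero v : tent v = 0 -> v = 0 \/ v = 1.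
Proof. unfold tent, Rabs. destruct Rcase_abs; intros; [right|left]; lra. Qed.

Lemma iter_T phi : maps01 phi -> comm phi ->
  forall n x, 0 <= x <= 1 -> phi x = Tw (phi (x*(/2)^n) / (/2)^n).
Proof.
  intros Hm Hc n. induction n; intros x Hx.
  - simpl. rewrite Rmult_1_r. unfold Rdiv. rewrite Rinv_1, Rmult_1_r.
    rewrite T01; [reflexivity|apply Hm; exact Hx].
  - rewrite (phi_half phi Hc x Hx). rewrite (IHn (x/2)) by lra.
    pose proof (pow_half_pos n) as Hp.
    assert (I01 (x/2 * (/2)^n)).
    { pose proof (pow_half_le1 n). unfold I01. split; [nra|nra]. }
    rewrite <- T_double.
    + f_equal. simpl pow. replace (x * (/2 * (/2)^n)) with (x/2 * (/2)^n) by field.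
      field. lra.
    + unfold Rdiv; apply Rmult_le_pos; [apply Hm; assumption|left; apply Rinv_0_lt_compat; lra].
Qed.

Lemma phi0_zero phi c1 : maps01 phi -> continuous_on01 phi -> comm phi ->
  ~ (forall x, I01 x -> phi x = phi 0) -> 0 < c1 -> c1 <= 1 ->
  monotone_on phi 0 c1 -> phi 0 = 0.
Proof.
  intros Hm Hcont Hc NC Hc1 Hc1' Hmon.
  assert (F : tent (phi 0) = phi 0).
  { rewrite Hc by (unfold I01; lra). f_equal. unfold tent. rewrite Rabs_pos_eq; lra. }
  destruct (fixed_tent _ F) as [E|E]; [exact E|exfalso].
  destruct (Hcont 0 ltac:(unfold I01; lra) (/6) ltac:(lra)) as [d0 [Hd0 Hd0']].
  set (d := Rmin (Rmin (d0/2) c1) (/2)).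
  assert (Hd : 0 < d) by (unfold d; repeat apply Rmin_glb_lt; lra).
  assert (Hd1 : d <= d0/2) by (unfold d; eapply Rle_trans; [apply Rmin_l|apply Rmin_l]).
  assert (Hd2 : d <= c1) by (unfold d; eapply Rle_trans; [apply Rmin_l|apply Rmin_r]).
  assert (Hd3 : d <= /2) by (unfold d; apply Rmin_r).
  assert (Big : forall y, 0 <= y <= d -> phi y > /2).
  { intros y Hy. assert (Rabs (phi y - phi 0) < /6).
    { apply Hd0'. unfold I01; lra. rewrite Rminus_0_r, Rabs_pos_eq; lra. }
    rewrite E in H. unfold Rabs in H. destruct Rcase_abs in H; lra. }
  assert (Dbl : forall y, 0 <= y <= d/2 -> phi (2*y) = 2 - 2 * phi y).
  { intros y Hy. rewrite (phi_half phi Hc (2*y)) by lra.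
    replace (2*y/2) with y by field. unfold tent.
    pose proof (Big y ltac:(lra)). rewrite Rabs_left; lra. }
  apply NC. apply (const0_global phi (d/2) Hc); [lra|].
  intros x Hx _. rewrite E. pose proof (Dbl x Hx).
  destruct Hmon as [Hn|Hn].
  - assert (phi 0 <= phi x) by (apply Hn; lra).
    assert (phi 0 <= phi (2*x)) by (apply Hn; lra). lra.
  - assert (phi x <= phi 0) by (apply Hn; lra).
    assert (phi (2*x) <= phi 0) by (apply Hn; lra). lra.
Qed.

Lemma small_scale phi c1 : maps01 phi -> continuous_on01 phi -> comm phi ->
  ~ (forall x, I01 x -> phi x = phi 0) -> 0 < c1 -> c1 <= 1 ->
  monotone_on phi 0 c1 -> phi 0 = 0 ->
  exists d, 0 < d <= /2 /\ (forall y, 0 <= y <= d -> phi y <= /2) /\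
    (forall x y, 0 <= x -> x < y -> y <= d -> phi x < phi y) /\
    (forall y, 0 <= y <= d -> phi (2*y) = 2 * phi y).
Proof.
  intros Hm Hcont Hc NC Hc1 Hc1' Hmon E.
  assert (Hnd : nondecr_on phi 0 c1).
  { destruct Hmon as [Hn|Hn]; [exact Hn|exfalso].
    apply NC. apply (const0_global phi c1 Hc Hc1).
    intros x Hx Hx1. assert (phi x <= phi 0) by (apply Hn; lra).
    assert (0 <= phi x) by (apply Hm; unfold I01; lra). lra. }
  destruct (Hcont 0 ltac:(unfold I01; lra) (/2) ltac:(lra)) as [d0 [Hd0 Hd0']].
  set (d := Rmin (Rmin (d0/2) c1) (/2)).
  assert (Hd : 0 < d) by (unfold d; repeat apply Rmin_glb_lt; lra).
  assert (Hd1 : d <= d0/2) by (unfold d; eapply Rle_trans; [apply Rmin_l|apply Rmin_l]).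
  assert (Hd2 : d <= c1) by (unfold d; eapply Rle_trans; [apply Rmin_l|apply Rmin_r]).
  assert (Hd3 : d <= /2) by (unfold d; apply Rmin_r).
  assert (Small : forall y, 0 <= y <= d -> phi y <= /2).
  { intros y Hy. assert (Rabs (phi y - phi 0) < /2).
    { apply Hd0'. unfold I01; lra. rewrite Rminus_0_r, Rabs_pos_eq; lra. }
    rewrite E in H. unfold Rabs in H. destruct Rcase_abs in H; lra. }
  exists d. split; [lra|]. split; [exact Small|]. split.
  - intros x y Hx Hxy Hy.
    assert (Hle : phi x <= phi y) by (apply Hnd; lra).
    destruct (Req_dec (phi x) (phi y)) as [Eq|Ne]; [|lra].
    exfalso. apply NC. apply (const_interval phi x y (phi x) Hc); try lra.
    intros z Hz. assert (phi x <= phi z) by (apply Hnd; lra).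
    assert (phi z <= phi y) by (apply Hnd; lra). lra.
  - intros y Hy. rewrite (phi_half phi Hc (2*y)) by lra.
    replace (2*y/2) with y by field. unfold tent.
    assert (0 <= phi y) by (apply Hm; unfold I01; lra).
    pose proof (Small y Hy). rewrite Rabs_pos_eq; lra.
Qed.

Lemma core_phi phi d : maps01 phi -> continuous_on01 phi -> comm phi -> phi 0 = 0 ->
  0 < d <= /2 -> (forall y, 0 <= y <= d -> phi y <= /2) ->
  (forall x y, 0 <= x -> x < y -> y <= d -> phi x < phi y) ->
  (forall y, 0 <= y <= d -> phi (2*y) = 2 * phi y) ->
  exists n0, 0 < INR n0 /\ forall x, I01 x -> phi x = Tw (INR n0 * x).
Proof.
  intros Hm Hcont Hc E0 Hd Hsmall Hstr Hdbl.
  destruct (pow_small (d/2)) as [N HN]; [lra|].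
  pose proof (pow_half_pos N) as Hs. set (s := (/2)^N) in *.
  set (Rf := fun x => phi (x*s)/s).
  assert (Hsc : forall x, 0 <= x <= 2 -> 0 <= x*s <= d) by (intros; split; nra).
  assert (Rstrict : forall x y, 0 <= x -> x < y -> y <= 2 -> Rf x < Rf y).
  { intros x y Hx Hxy Hy. unfold Rf, Rdiv. apply Rmult_lt_compat_r.
    - apply Rinv_0_lt_compat; lra.
    - apply Hstr; nra. }
  assert (Rle' : forall x y, 0 <= x -> x <= y -> y <= 2 -> Rf x <= Rf y).
  { intros x y Hx Hxy Hy. destruct (Req_dec x y) as [->|]; [lra|]. left; apply Rstrict; lra. }
  assert (Rdbl : forall x, 0 <= x <= 1 -> Rf (2*x) = 2 * Rf x).
  { intros x Hx. unfold Rf. replace (2*x*s) with (2*(x*s)) by ring.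
    rewrite Hdbl by nra. field. lra. }
  assert (R0 : Rf 0 = 0) by (unfold Rf; rewrite Rmult_0_l, E0; field; lra).
  assert (HT : forall x, 0 <= x <= 1 -> phi x = Tw (Rf x)).
  { intros x Hx. unfold Rf, s. apply iter_T; assumption. }
  set (m := Rf 1).
  assert (Hm0 : 0 < m) by (unfold m; rewrite <- R0; apply Rstrict; lra).
  assert (Hphi1 : phi 1 = 0 \/ phi 1 = 1).
  { apply tent_zero. rewrite Hc by (unfold I01; lra).
    replace (tent 1) with 0 by (unfold tent; rewrite Rabs_left; lra). exact E0. }
  destruct (T_is_nat m) as [n0 Hn0]; [lra|unfold m; rewrite <- HT by lra; exact Hphi1|].
  assert (Rpos : forall x, 0 <= x <= 2 -> 0 <= Rf x) by (intros; rewrite <- R0; apply Rle'; lra).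
  assert (Eq : forall u, I01 u -> Rf u = 2*m - Rf (2-u)).
  { set (A := fun u => Rf u). set (B := fun u => 2*m - Rf (2-u)).
    assert (contA : continuous_on01 A).
    { apply (cont_ext (fun u => 0 + /s * phi (s*u+0))).
      - apply cont_affine; [exact Hcont|]. intros u Hu. unfold I01 in *. split; nra.
      - intros x Hx. unfold A, Rf. replace (s*x+0) with (x*s) by ring. field. lra. }
    assert (contB : continuous_on01 B).
    { apply (cont_ext (fun u => 2*m + (- /s) * phi ((-s)*u+2*s))).
      - apply cont_affine; [exact Hcont|]. intros u Hu. unfold I01 in *. split; nra.
      - intros x Hx. unfold B, Rf. replace (-s*x+2*s) with ((2-x)*s) by ring. field. lra. }
    assert (sA : strict A) by (intros x y ? ? ?; unfold A; apply Rstrict; lra).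
    assert (sB : strict B) by (intros x y ? ? ?; unfold B; assert (Rf (2-y) < Rf (2-x)) by (apply Rstrict; lra); lra).
    assert (A0 : A 0 = 0) by exact R0.
    assert (B0 : B 0 = 0).
    { unfold B. replace (2-0) with (2*1) by ring. rewrite Rdbl by lra. unfold m. ring. }
    assert (TAB : forall u, I01 u -> Tw (A u) = Tw (B u)).
    { intros u Hu. unfold I01 in Hu. unfold A, B.
      rewrite <- HT by lra. rewrite Hn0.
      rewrite T_refl.
      2:{ split; [apply Rpos; lra|]. rewrite <- Hn0. unfold m.
          replace 2 with (2*1) at 3 by ring. rewrite <- Rdbl by lra. apply Rle'; lra. }
      replace (2-u) with (2*(1-u/2)) by field. rewrite Rdbl by lra.
      rewrite T_double by (apply Rpos; lra). rewrite <- HT by lra.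
      apply phi_refl; [exact Hc|lra]. }
    intros u Hu. exact (lift_eq A B contA contB sA sB A0 B0 TAB u Hu). }
  assert (Sym0 : forall w, 0 <= w <= /2 -> Rf w + Rf (1-w) = m).
  { intros w Hw. pose proof (Eq (2*w) ltac:(unfold I01; lra)) as H.
    rewrite Rdbl in H by lra. replace (2 - 2*w) with (2*(1-w)) in H by ring.
    rewrite Rdbl in H by lra. lra. }
  assert (Sym : forall w, 0 <= w <= 1 -> Rf w + Rf (1-w) = m).
  { intros w Hw. destruct (Rle_or_lt w (/2)); [apply Sym0; lra|].
    pose proof (Sym0 (1-w) ltac:(lra)). replace (1-(1-w)) with w in H0 by ring. lra. }
  assert (Ctr : forall n w, 0 <= w <= 1 -> Rabs (Rf w - m*w) <= m * (/2)^n).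
  { induction n; intros w Hw.
    - simpl. assert (0 <= Rf w) by (apply Rpos; lra).
      assert (Rf w <= m) by (unfold m; apply Rle'; lra).
      unfold Rabs; destruct Rcase_abs; nra.
    - simpl pow. destruct (Rle_or_lt w (/2)) as [Hw2|Hw2].
      + replace (Rf w - m*w) with ((Rf (2*w) - m*(2*w))/2) by (rewrite Rdbl by lra; field).
        unfold Rdiv. rewrite Rabs_mult, (Rabs_pos_eq (/2)) by lra.
        pose proof (IHn (2*w) ltac:(lra)). nra.
      + assert (Rf w = m - Rf (2-2*w)/2).
        { replace (2-2*w) with (2*(1-w)) by ring. rewrite Rdbl by lra.
          pose proof (Sym w Hw). lra. }
        replace (Rf w - m*w) with (-((Rf (2-2*w) - m*(2-2*w))/2)) by (rewrite H; field).
        rewrite Rabs_Ropp. unfold Rdiv. rewrite Rabs_mult, (Rabs_pos_eq (/2)) by lra.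
        pose proof (IHn (2-2*w) ltac:(lra)). nra. }
  assert (Lin : forall w, 0 <= w <= 1 -> Rf w = m*w).
  { intros w Hw. destruct (Req_dec (Rf w - m*w) 0) as [Z|Z]; [lra|exfalso].
    pose proof (Rabs_pos_lt _ Z) as Hp.
    destruct (pow_small (Rabs (Rf w - m*w) / m)) as [n Hn].
    { apply Rdiv_lt_0_compat; lra. }
    pose proof (Ctr n w Hw).
    apply (Rmult_lt_compat_l m) in Hn; [|lra].
    replace (m * (Rabs (Rf w - m*w) / m)) with (Rabs (Rf w - m*w)) in Hn by (field; lra).
    lra. }
  exists n0. split; [lra|].
  intros x Hx. unfold I01 in Hx. rewrite HT by lra. rewrite Lin by lra. rewrite Hn0. reflexivity.
Qed.

Lemma core phi t b : maps01 phi -> continuous_on01 phi -> comm phi ->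
  (exists x y, I01 x /\ I01 y /\ phi x <> phi y) -> (1 <= t)%nat ->
  b 0%nat = 0 -> b t = 1 -> (forall i, (i < t)%nat -> b i < b (S i)) ->
  (forall i, (i < t)%nat -> monotone_on phi (b i) (b (S i))) ->
  (forall i, (S i < t)%nat -> ~ monotone_on phi (b i) (b (S (S i)))) ->
  forall x, I01 x -> phi x = Tw (INR t * x).
Proof.
  intros Hm Hcont Hc [x0 [y0 [Hx0 [Hy0 Hne]]]] Ht b0 bt Hinc Hmon Hnm.
  assert (NC : ~ (forall x, I01 x -> phi x = phi 0)).
  { intros H. apply Hne. rewrite (H x0 Hx0), (H y0 Hy0). reflexivity. }
  assert (Hc1 : 0 < b 1%nat) by (rewrite <- b0; apply Hinc; lia).
  assert (Hc1' : b 1%nat <= 1) by (rewrite <- bt; apply (b_mono b t Hinc); lia).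
  assert (Hm1 : monotone_on phi 0 (b 1%nat)) by (rewrite <- b0; apply Hmon; lia).
  pose proof (phi0_zero phi (b 1%nat) Hm Hcont Hc NC Hc1 Hc1' Hm1) as E0.
  destruct (small_scale phi (b 1%nat) Hm Hcont Hc NC Hc1 Hc1' Hm1 E0) as [d [Hd [Hs [Hst Hdb]]]].
  destruct (core_phi phi d Hm Hcont Hc E0 Hd Hs Hst Hdb) as [n0 [Hn0 Hphi]].
  pose proof (lap_count phi n0 t b Hphi Hn0 Ht b0 bt Hinc Hmon Hnm) as E. subst n0.
  exact Hphi.
Qed.

Lemma mono_to psi h hinv p q : maps01 psi -> maps01 h -> maps01 hinv ->
  (forall y, I01 y -> h (hinv y) = y) ->
  (forall x y, 0 <= x -> x <= y -> y <= 1 -> h x <= h y) ->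
  (forall x y, 0 <= x -> x <= y -> y <= 1 -> hinv x <= hinv y) ->
  0 <= p -> p <= q -> q <= 1 -> monotone_on psi p q ->
  monotone_on (fun x => hinv (psi (h x))) (hinv p) (hinv q).
Proof.
  intros Hpm Hhm Hhim Hhih hle hile Hp Hpq Hq Hmon.
  assert (I01 (hinv p)) by (apply Hhim; unfold I01; lra).
  assert (I01 (hinv q)) by (apply Hhim; unfold I01; lra).
  unfold I01 in *.
  assert (K : forall x, hinv p <= x -> x <= hinv q -> p <= h x <= q).
  { intros x H1 H2. split.
    - rewrite <- (Hhih p) at 1 by (unfold I01; lra). apply hle; lra.
    - rewrite <- (Hhih q) by (unfold I01; lra). apply hle; lra. }
  destruct Hmon as [Hn|Hn]; [left|right]; intros x y Hx Hxy Hy;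
  pose proof (K x Hx ltac:(lra)); pose proof (K y ltac:(lra) Hy);
  assert (h x <= h y) by (apply hle; lra).
  - apply hile; [apply Hpm; unfold I01; lra| apply Hn; lra| apply Hpm; unfold I01; lra].
  - apply hile; [apply Hpm; unfold I01; lra| apply Hn; lra| apply Hpm; unfold I01; lra].
Qed.

Lemma mono_from psi h hinv p q : maps01 psi -> maps01 h -> maps01 hinv ->
  (forall y, I01 y -> h (hinv y) = y) ->
  (forall x y, 0 <= x -> x <= y -> y <= 1 -> h x <= h y) ->
  (forall x y, 0 <= x -> x <= y -> y <= 1 -> hinv x <= hinv y) ->
  0 <= p -> p <= q -> q <= 1 ->
  monotone_on (fun x => hinv (psi (h x))) (hinv p) (hinv q) -> monotone_on psi p q.
Proof.
  intros Hpm Hhm Hhim Hhih hle hile Hp Hpq Hq Hmon.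
  assert (G : forall x y, p <= x -> x <= y -> y <= q ->
     hinv p <= hinv x /\ hinv x <= hinv y /\ hinv y <= hinv q).
  { intros x y ? ? ?. split; [|split]; apply hile; lra. }
  assert (B : forall x, p <= x -> x <= q -> I01 (hinv (psi x))).
  { intros. apply Hhim, Hpm. unfold I01; lra. }
  destruct Hmon as [Hn|Hn]; [left|right]; intros x y Hx Hxy Hy;
  destruct (G x y Hx Hxy Hy) as [G1 [G2 G3]]; simpl in Hn;
  pose proof (Hn _ _ G1 G2 G3) as Hk; cbv beta in Hk;
  rewrite (Hhih x), (Hhih y) in Hk by (unfold I01; lra).
  - rewrite <- (Hhih (psi x)), <- (Hhih (psi y)) by (apply Hpm; unfold I01; lra).
    pose proof (B x ltac:(lra) ltac:(lra)). pose proof (B y ltac:(lra) ltac:(lra)).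
    unfold I01 in *. apply hle; lra.
  - rewrite <- (Hhih (psi x)), <- (Hhih (psi y)) by (apply Hpm; unfold I01; lra).
    pose proof (B x ltac:(lra) ltac:(lra)). pose proof (B y ltac:(lra) ltac:(lra)).
    unfold I01 in *. apply hle; lra.
Qed.

Theorem lemma4p1 (g h hinv psi : R -> R) (t : nat) :
  maps01 g -> unimodal g -> piecewise_linear01 g ->
  homeo01 h hinv ->
  (forall x, I01 x -> h (tent x) = g (h x)) ->
  maps01 psi -> continuous_on01 psi ->
  (exists x y, I01 x /\ I01 y /\ psi x <> psi y) ->
  (forall x, I01 x -> g (psi x) = psi (g x)) ->
  (1 <= t)%nat -> monotone_laps psi t ->
  forall x, I01 x -> psi x = h (xi t (hinv x)).
Proof.
  intros Hgm [v [Hv [_ [_ [g0 [g1 gv]]]]]] _ [Hhm [Hhim [Hhh [Hhih [Hhc Hhic]]]]]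
    Hconj Hpm Hpc [x0 [y0 [Hx0 [Hy0 Hne]]]] Hcomm Ht [b [b0 [bt [Hinc [Hmon Hnm]]]]] x Hx.
  assert (I0 : I01 0) by (unfold I01; lra).
  assert (I1 : I01 1) by (unfold I01; lra).
  assert (Hinj : forall x y, I01 x -> I01 y -> h x = h y -> x = y).
  { intros a c Ha Hc E. rewrite <- (Hhh a Ha), <- (Hhh c Hc), E. reflexivity. }
  assert (H01 : h 0 < h 1).
  { destruct (Rtotal_order (h 0) (h 1)) as [|[E|E]]; [assumption| |].
    - apply Hinj in E; auto. lra.
    - exfalso.
      assert (Hd : forall a c, 0 <= a -> a < c -> c <= 1 -> - h a < - h c).
      { apply inj_incr.
        - apply (cont_ext (fun u => 0 + (-1) * h (1*u+0))).
          + apply cont_affine; [exact Hhc|]. intros u Hu. replace (1*u+0) with u by ring. exact Hu.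
          + intros. replace (1*x1+0) with x1 by ring. ring.
        - intros a c Ha Hc E'. apply Hinj; auto. lra.
        - lra. }
      assert (h 1 <= h (hinv 0)).
      { pose proof (Hhim 0 I0) as Hi. unfold I01 in Hi.
        destruct (Req_dec (hinv 0) 1) as [->|Hn]; [lra|].
        assert (- h (hinv 0) < - h 1) by (apply Hd; lra). lra. }
      rewrite Hhih in H by exact I0.
      pose proof (Hhm 1 I1) as Hh1. unfold I01 in Hh1.
      assert (h 1 = 0) by lra.
      assert (h 0 = 0).
      { replace 0 with (tent 1) at 1 by (unfold tent; rewrite Rabs_left; lra).
        rewrite Hconj by exact I1. rewrite H0. exact g0. }
      lra. }
  assert (hlt : forall a c, 0 <= a -> a < c -> c <= 1 -> h a < h c).
  { apply inj_incr; auto. }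
  assert (hle : forall a c, 0 <= a -> a <= c -> c <= 1 -> h a <= h c).
  { intros a c ? ? ?. destruct (Req_dec a c) as [->|]; [lra|]. left; apply hlt; lra. }
  assert (hile : forall a c, 0 <= a -> a <= c -> c <= 1 -> hinv a <= hinv c).
  { intros a c ? ? ?. apply Rnot_lt_le. intros Hl.
    pose proof (Hhim a ltac:(unfold I01; lra)). pose proof (Hhim c ltac:(unfold I01; lra)).
    unfold I01 in *.
    assert (Hq : h (hinv c) < h (hinv a)) by (apply hlt; lra).
    rewrite !Hhih in Hq by (unfold I01; lra). lra. }
  assert (hilt : forall a c, 0 <= a -> a < c -> c <= 1 -> hinv a < hinv c).
  { intros a c ? ? ?. destruct (Req_dec (hinv a) (hinv c)) as [E|E].
    - exfalso. assert (Hq : h (hinv a) = h (hinv c)) by (rewrite E; reflexivity).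
      rewrite !Hhih in Hq by (unfold I01; lra). lra.
    - pose proof (hile a c ltac:(lra) ltac:(lra) ltac:(lra)). lra. }
  assert (h0 : h 0 = 0).
  { pose proof (Hhm 0 I0). pose proof (Hhim 0 I0). unfold I01 in *.
    assert (Hq : h 0 <= h (hinv 0)) by (apply hle; lra). rewrite Hhih in Hq by exact I0. lra. }
  assert (h1 : h 1 = 1).
  { pose proof (Hhm 1 I1). pose proof (Hhim 1 I1). unfold I01 in *.
    assert (Hq : h (hinv 1) <= h 1) by (apply hle; lra). rewrite Hhih in Hq by exact I1. lra. }
  assert (hi0 : hinv 0 = 0) by (rewrite <- h0 at 1; apply Hhh; exact I0).
  assert (hi1 : hinv 1 = 1) by (rewrite <- h1 at 1; apply Hhh; exact I1).
  set (phi := fun x => hinv (psi (h x))).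
  assert (Hb01 : forall i, (i <= t)%nat -> 0 <= b i <= 1).
  { intros i Hi. split.
    - rewrite <- b0. apply (b_mono b t Hinc); lia.
    - rewrite <- bt. apply (b_mono b t Hinc); lia. }
  assert (Hcore : forall y, I01 y -> phi y = Tw (INR t * y)).
  { apply (core phi t (fun i => hinv (b i))).
    - intros y Hy. unfold phi. apply Hhim, Hpm, Hhm, Hy.
    - unfold phi. apply (cont_comp hinv (fun x => psi (h x))); auto.
      + apply cont_comp; auto.
      + intros y Hy. apply Hpm, Hhm, Hy.
    - intros y Hy. unfold phi.
      pose proof (tent_01 (hinv (psi (h y))) (Hhim _ (Hpm _ (Hhm _ Hy)))) as Ht1.
      rewrite Hconj by exact Hy. rewrite <- Hcomm by (apply Hhm, Hy).
      rewrite <- (Hhih (psi (h y))) at 2 by (apply Hpm, Hhm, Hy).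
      rewrite <- Hconj by (apply Hhim, Hpm, Hhm, Hy).
      rewrite Hhh by exact Ht1. reflexivity.
    - exists (hinv x0), (hinv y0). split; [apply Hhim; exact Hx0|]. split; [apply Hhim; exact Hy0|].
      unfold phi. rewrite (Hhih x0 Hx0), (Hhih y0 Hy0). intros E.
      apply Hne. rewrite <- (Hhih (psi x0)), <- (Hhih (psi y0)) by (apply Hpm; assumption).
      rewrite E. reflexivity.
    - exact Ht.
    - simpl. rewrite b0. exact hi0.
    - simpl. rewrite bt. exact hi1.
    - intros i Hi. simpl. pose proof (Hb01 i ltac:(lia)). pose proof (Hb01 (S i) ltac:(lia)).
      pose proof (Hinc i Hi). apply hilt; lra.
    - intros i Hi. simpl. pose proof (Hb01 i ltac:(lia)). pose proof (Hb01 (S i) ltac:(lia)).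
      pose proof (Hinc i Hi). unfold phi.
      apply mono_to; auto; lra.
    - intros i Hi. simpl. pose proof (Hb01 i ltac:(lia)). pose proof (Hb01 (S (S i)) ltac:(lia)).
      intros Hm'. apply (Hnm i Hi).
      assert (b i <= b (S (S i))) by (apply (b_mono b t Hinc); lia).
      apply (mono_from psi h hinv); auto; lra. }
  rewrite xi_Tw. rewrite <- Hcore by (apply Hhim; exact Hx).
  unfold phi. rewrite (Hhih x Hx). rewrite Hhih by (apply Hpm; exact Hx). reflexivity.
Qed.
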